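(* Let $G=(V,E)$ be a finite connected graph and $\mathbf{p}\in\mathbb{R}^V$ with $\sum_{v\in V}\mathbf{p}_v=0$. Let $\mathcal{G}=(\mathcal V,\mathcal E)$ be a connected component of the graph $\mathfrak G$, with $\mathcal V=\mathcal V_1\sqcup\mathcal V_2$, $\mathcal V_i=\mathcal V\cap\mathfrak V_i$, and suppose $\mathcal G$ contains no special vertex. Then $$\sum_{\mathfrak u\in\mathcal V_1}q(\mathfrak u)=\sum_{\mathfrak w\in\mathcal V_2}q(\mathfrak w).$$
   Context: Spanning trees and spanning 2-forests (acyclic spanning subgraphs with exactly two connected components) of $G$ form sets $\mathcal{ST}$, $\mathcal{SF}_2$; $F+e$ (resp. $T-e$) denotes the spanning subgraph obtained by adding (resp. removing) the edge $e$. For $F\in\mathcal{SF}_2$, $\mathcal{P}(F)=\{X,X'\}$ is the partition of $V$ into the vertex sets of its two components, $F\sim_v F'$ iff $\mathcal{P}(F)=\mathcal{P}(F')$, and $q(F)=(\sum_{v\in X}\mathbf{p}_v)^2$ (independent of the choice of part since $\mathbf{p}$ sums to zero). The graph $\mathfrak G$ is bipartite with vertex set $\mathfrak V_1\sqcup\mathfrak V_2$, $\mathfrak V_1=\{(F_1,F_2,T):F_1,F_2\in\mathcal{SF}_2,T\in\mathcal{ST}\}$, $\mathfrak V_2=\{(T_1,T_2,F):T_1,T_2\in\mathcal{ST},F\in\mathcal{SF}_2\}$; $(F_1,F_2,T)$ is adjacent to $(T_1,T_2,F)$ iff there is an edge $e$ with $T=F+e$, $F_1=T_1-e$, $F_2=T_2-e$.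 A vertex $(F_1,F_2,T)\in\mathfrak V_1$ is special if $F_1\not\sim_v F_2$; a vertex $(T_1,T_2,F)\in\mathfrak V_2$ is special if there is an edge $e\in(E(T_1)\setminus E(T_2))\cup(E(T_2)\setminus E(T_1))$ with $F+e$ a spanning tree. For non-special vertices, $q(F_1,F_2,T)=q(F_1)$ $(=q(F_2))$ and $q(T_1,T_2,F)=q(F)$. *)

(* Defs.v *)
From HB Require Import structures.
From mathcomp Require Import all_boot all_order all_algebra.
From Stdlib Require Import Relation_Operators.
Set Implicit Arguments. Unset Strict Implicit. Unset Printing Implicit Defensive.
Import Order.TTheory GRing.Theory Num.Theory.

(* A finite simple graph G = (V, E): V a finType, E a set of 2-element
   subsets of V.  A spanning subgraph is given by its edge set F : {set {set V}}. *)

Definition simple_graph (V : finType) (E : {set {set V}}) : Prop :=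
  forall e, e \in E -> #|e| = 2%N.

Definition adj (V : finType) (F : {set {set V}}) : rel V :=
  fun x y => [set x; y] \in F.

Definition comps (V : finType) (F : {set {set V}}) : {set {set V}} :=
  [set [set y | connect (adj F) x y] | x : V].

Definition graph_connected (V : finType) (E : {set {set V}}) : Prop :=
  #|comps E| = 1%N.

Definition acyclic (V : finType) (F : {set {set V}}) : Prop :=
  forall c : seq V, (2 < size c)%N -> ~~ (cycle (adj F) c && uniq c).

Definition spanning_tree (V : finType) (E F : {set {set V}}) : Prop :=
  [/\ F \subset E, acyclic F & #|comps F| = 1%N].

Definition spanning_2forest (V : finType) (E F : {set {set V}}) : Prop :=
  [/\ F \subset E, acyclic F & #|comps F| = 2%N].

Definition vequiv (V : finType) (F F' : {set {set V}}) : Prop := comps F = comps F'.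

Definition qF (R : numDomainType) (V : finType) (p : V -> R) (F : {set {set V}}) : R :=
  if [pick X in comps F] is Some X then ((\sum_(v in X) p v) ^+ 2)%R else 0%R.

Definition edgeset_triple (V : finType) : finType :=
  ({set {set V}} * {set {set V}} * {set {set V}})%type.

(* vertices of the big graph: inl (F1,F2,T) in V1, inr (T1,T2,F) in V2 *)
Definition bigvert (V : finType) : finType :=
  (edgeset_triple V + edgeset_triple V)%type.

Definition valid_vert (V : finType) (E : {set {set V}}) (u : bigvert V) : Prop :=
  match u with
  | inl (F1, F2, T) => [/\ spanning_2forest E F1, spanning_2forest E F2 & spanning_tree E T]
  | inr (T1, T2, F) => [/\ spanning_tree E T1, spanning_tree E T2 & spanning_2forest E F]
  end.

Definition link (V : finType) (E : {set {set V}}) (x y : edgeset_triple V) : Prop :=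
  let: (F1, F2, T) := x in
  let: (T1, T2, F) := y in
  exists2 e, e \in E &
    [/\ T = F :|: [set e], F1 = T1 :\ e & F2 = T2 :\ e].

Definition bigadj (V : finType) (E : {set {set V}}) (u w : bigvert V) : Prop :=
  valid_vert E u /\ valid_vert E w /\
  match u, w with
  | inl x, inr y => link E x y
  | inr y, inl x => link E x y
  | _, _ => False
  end.

Definition big_component (V : finType) (E : {set {set V}}) (C : {set bigvert V}) : Prop :=
  exists u0, valid_vert E u0 /\
    forall w, w \in C <-> clos_refl_trans (bigvert V) (bigadj E) u0 w.

Definition special (V : finType) (E : {set {set V}}) (u : bigvert V) : Prop :=
  match u with
  | inl (F1, F2, T) => ~ vequiv F1 F2
  | inr (T1, T2, F) =>
      exists2 e, e \in (T1 :\: T2) :|: (T2 :\: T1) & spanning_tree E (F :|: [set e])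
  end.

(* Main.v *)
From HB Require Import structures.
From mathcomp Require Import all_boot all_order all_algebra.
From Stdlib Require Import Relation_Operators.
From mathcomp Require Import ring.
Require Import Defs.
Set Implicit Arguments. Unset Strict Implicit. Unset Printing Implicit Defensive.
Import Order.TTheory GRing.Theory Num.Theory.

Section G.
Variable V : finType.
Implicit Types F G T : {set {set V}}.

Lemma adj_sym F : symmetric (adj F).
Proof. by move=> x y; rewrite /adj setUC. Qed.

Lemma csym F : connect_sym (adj F).
Proof. exact: sym_connect_sym (adj_sym F). Qed.

Definition Cc F x := [set y | connect (adj F) x y].

Lemma Cc_eq F x y : connect (adj F) x y -> Cc F x = Cc F y.
Proof.
move=> h; apply/setP => z; rewrite !inE; apply/idP/idP => h2.
  by rewrite csym in h; exact: connect_trans h h2.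
exact: connect_trans h h2.
Qed.

Lemma Cc_in F x : Cc F x \in comps F.
Proof. by apply/imsetP; exists x. Qed.

Lemma Cc_self F x : x \in Cc F x.
Proof. by rewrite inE connect0. Qed.

Lemma comps_mem F X x : X \in comps F -> x \in X -> X = Cc F x.
Proof. by case/imsetP => y _ ->; rewrite inE => h; exact: Cc_eq. Qed.

Lemma conn1 F : #|comps F| = 1%N -> forall x y, connect (adj F) x y.
Proof.
move/eqP/cards1P => [X hX] x y.
have := Cc_in F x; have := Cc_in F y; rewrite hX !inE => /eqP hy /eqP hx.
have: y \in Cc F x by rewrite hx -hy Cc_self.
by rewrite inE.
Qed.

Lemma comps_of2 F a b : (forall v, connect (adj F) a v || connect (adj F) b v) ->
  comps F = [set Cc F a; Cc F b].
Proof.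
move=> h; apply/setP => X; apply/imsetP/idP.
  case=> v _ ->; rewrite !inE; case/orP: (h v) => /Cc_eq ->; by rewrite eqxx ?orbT.
by rewrite !inE => /orP[] /eqP ->; eexists.
Qed.

Lemma Cc_neq F a b : ~~ connect (adj F) a b -> Cc F a != Cc F b.
Proof.
by move=> h; apply/negP => /eqP e; move: (Cc_self F b); rewrite -e inE (negPf h).
Qed.

Lemma comps2 F a b : #|comps F| = 2%N -> ~~ connect (adj F) a b ->
  comps F = [set Cc F a; Cc F b].
Proof.
move=> h2 nab; apply/eqP; rewrite eq_sym eqEcard subUset !sub1set !Cc_in /=.
by rewrite cards2 Cc_neq // h2.
Qed.

Lemma conn2 F a b : #|comps F| = 2%N -> ~~ connect (adj F) a b ->
  forall v, connect (adj F) a v || connect (adj F) b v.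
Proof.
move=> h2 nab v; have := Cc_in F v; rewrite (comps2 h2 nab) !inE.
by case/orP => /eqP h; have := Cc_self F v; rewrite h inE => ->; rewrite ?orbT.
Qed.

Lemma adj_sub F F' : F \subset F' -> subrel (adj F) (adj F').
Proof. by move=> s x y; exact: (subsetP s). Qed.

Lemma connect_mono F F' : F \subset F' ->
  subrel (connect (adj F)) (connect (adj F')).
Proof. by move=> s; apply: connect_sub => x y h; apply: connect1; exact: adj_sub h. Qed.

Lemma conn_union1 F a b : #|comps F| = 2%N -> ~~ connect (adj F) a b ->
  #|comps (F :|: [set [set a; b]])| = 1%N.
Proof.
move=> h2 nab; set F' := F :|: _.
have sF : F \subset F' by rewrite subsetUl.
have hab : adj F' a b by rewrite /adj !inE eqxx orbT.
have hv : forall v, connect (adj F') a v.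
  move=> v; case/orP: (conn2 h2 nab v) => h; first exact: connect_mono h.
  exact: connect_trans (connect1 hab) (connect_mono sF h).
apply/eqP/cards1P; exists (Cc F' a); apply/setP => X; rewrite inE.
apply/imsetP/eqP; first by case=> v _ ->; apply/esym/Cc_eq.
by move=> ->; eexists.
Qed.

Lemma acyclic_sub F F' : F \subset F' -> acyclic F' -> acyclic F.
Proof.
move=> s h c hc; apply/negP => /andP[cy u]; have := h c hc.
by rewrite (sub_cycle (adj_sub s) cy) u.
Qed.

Lemma tree_cut T a b : acyclic T -> [set a; b] \in T -> a != b ->
  ~~ connect (adj (T :\ [set a; b])) a b.
Proof.
move=> ac gT ab; apply/negP => /connectP [p pp].
case: (shortenP pp) => p' pp' u' _ lp.
have := ac (a :: p'); rewrite /= rcons_path (sub_path (adj_sub (subD1set T _)) pp') -lp.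
have -> : adj T b a by rewrite /adj setUC.
move: u' => /= /andP[-> ->] /= H; suff: (2 < (size p').+1)%N by move/H.
clear H; move: pp' lp.
case: p' => [|y [|z q]] //=.
- by move=> _ e; rewrite e eqxx in ab.
- by move=> /andP[h _] e; rewrite -e /adj !inE eqxx in h.
Qed.

Lemma tree_cut2 T a b : #|comps T| = 1%N -> acyclic T -> [set a; b] \in T -> a != b ->
  #|comps (T :\ [set a; b])| = 2%N.
Proof.
move=> h1 ac gT ab; set T' := T :\ _.
have nc := tree_cut ac gT ab.
suff hv : forall v, connect (adj T') a v || connect (adj T') b v.
  by rewrite (comps_of2 hv) cards2 Cc_neq.
move=> v.
have cl : closed (adj T) [pred v | connect (adj T') a v || connect (adj T') b v].
  move=> x y hxy /=.
  case: (eqVneq [set x; y] [set a; b]) => exy.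
    have : x \in [set a; b] by rewrite -exy !inE eqxx.
    have : y \in [set a; b] by rewrite -exy !inE eqxx orbT.
    rewrite !inE => /orP[] /eqP -> /orP[] /eqP ->;
      by rewrite !connect0 ?orbT.
  rewrite /=.
  have hT' : adj T' x y by rewrite /adj !inE exy.
  have c1 := connect1 hT'; have c2 : connect (adj T') y x by rewrite csym.
  by apply/orP/orP => [][] h; [left|right|left|right]; apply: connect_trans h _.
have := closed_connect cl (conn1 h1 a v); by rewrite !inE /= connect0 => <-.
Qed.


Lemma adj_add F a b u v : adj (F :|: [set [set a; b]]) u v ->
  (u \notin [set a; b]) || (v \notin [set a; b]) -> adj F u v.
Proof.
move=> h1 h2; move: h1; rewrite /adj /= in_setU in_set1 => /orP[h|/eqP e]; first exact: h.
move: h2.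
by rewrite -e !inE !eqxx ?orbT.
Qed.

Lemma adj_add2 F a b u v : adj (F :|: [set [set a; b]]) u v -> ~~ adj F u v ->
  [set u; v] = [set a; b].
Proof.
rewrite /adj /= in_setU in_set1 => /orP[h|/eqP e //]; by rewrite h.
Qed.

Lemma path_add F a b : forall s x y, s != [::] -> all (fun v => v \notin [set a; b]) s ->
  path (adj (F :|: [set [set a; b]])) x (rcons s y) -> path (adj F) x (rcons s y).
Proof.
elim=> [//|v s IH] x y _ /= /andP[hv hs] /andP[hxv hp].
rewrite (adj_add hxv) ?hv ?orbT //=.
case: s IH hs hp => [|w s] IH hs hp /=.
  by move: hp => /= /andP[h _]; rewrite (adj_add h) ?hv.
exact: IH.
Qed.

Lemma notin_ab (a b : V) (s : seq V) : a \notin s -> b \notin s ->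
  all (fun v => v \notin [set a; b]) s.
Proof.
move=> ha hb; apply/allP => v hv; rewrite !inE; apply/norP; split; apply/eqP => e.
  by rewrite -e hv in ha.
by rewrite -e hv in hb.
Qed.

Lemma acyclic_add F a b : acyclic F -> ~~ connect (adj F) a b -> a != b ->
  acyclic (F :|: [set [set a; b]]).
Proof.
move=> ac nab ab c hc; apply/negP => /andP[cy uc].
set F' := F :|: _ in cy.
case hin: ((a \in c) && (b \in c)).
  case/andP: hin => ha hb; case: (rot_to_arc uc ha hb ab) => i p1 p2 _ _ hr.
  have hcy : cycle (adj F') (a :: p1 ++ b :: p2) by rewrite -hr rot_cycle.
  have hu : uniq (a :: p1 ++ b :: p2) by rewrite -hr rot_uniq.
  have hs : (2 < size (a :: p1 ++ b :: p2))%N by rewrite -hr size_rot.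
  clear hr cy uc hc ha hb.
  rewrite /= rcons_cat /= -cat_rcons cat_path last_rcons in hcy.
  case/andP: hcy => h1 h2.
  move: hu; rewrite /= mem_cat negb_or cat_uniq /= inE negb_or.
  case/and5P => /and3P[ha1 _ ha2] _ /norP[hb1 _] hb2 _.
  case: p1 h1 hs ha1 hb1 => [|x p1] h1 hs ha1 hb1.
    case: p2 h2 hs ha2 hb2 => [//|y p2] h2 _ ha2 hb2.
    have hp := path_add (s := y :: p2) isT (notin_ab ha2 hb2) h2.
    move/negP: nab; apply; rewrite csym; apply/connectP; exists (rcons (y :: p2) a) => //.
    by rewrite last_rcons.
  have hp := path_add (s := x :: p1) isT (notin_ab ha1 hb1) h1.
  move/negP: nab; apply; apply/connectP; exists (rcons (x :: p1) b) => //.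
  by rewrite last_rcons.
have := ac c hc; rewrite uc andbT; move/negP; apply.
case: c hc cy uc hin => [//|x s] hc cy uc hin.
move: cy; rewrite /= => cy.
apply: (sub_in_path (P := mem (x :: s))) cy; last first.
  apply/allP => z hz; move: hz; rewrite /= !in_cons mem_rcons in_cons.
  by case/or3P => [->|->|h] //; apply/orP; right.
move=> u v hu hv h; case hF: (adj F u v) => //.
have e := adj_add2 h (negbT hF).
have ha : a \in x :: s.
  have : a \in [set u; v] by rewrite e !inE eqxx.
  by rewrite !inE => /orP[] /eqP ->; [exact: hu | exact: hv].
have hb : b \in x :: s.
  have : b \in [set u; v] by rewrite e !inE eqxx orbT.
  by rewrite !inE => /orP[] /eqP ->; [exact: hu | exact: hv].
by rewrite ha hb in hin.
Qed.

Definition cross F (e : {set V}) :=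
  [exists x in e, exists y in e, ~~ connect (adj F) x y].

Lemma cross2 F a b : cross F [set a; b] = ~~ connect (adj F) a b.
Proof.
apply/existsP/idP.
  case=> x /andP[hx /existsP[y /andP[hy h]]]; move: hx hy h.
  rewrite !inE => /orP[] /eqP -> /orP[] /eqP ->; rewrite ?connect0 //.
  by rewrite csym.
move=> h; exists a; rewrite !inE eqxx /=; apply/existsP; exists b.
by rewrite !inE eqxx orbT.
Qed.

Lemma cross_notin F a b : ~~ connect (adj F) a b -> [set a; b] \notin F.
Proof. by apply: contra => h; apply: connect1. Qed.

Lemma edge2 (E : {set {set V}}) (e : {set V}) : simple_graph E -> e \in E -> exists a b, a != b /\ e = [set a; b].
Proof. by move=> hs he; apply/cards2P; rewrite hs. Qed.
Local Open Scope ring_scope.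

Definition pv (R : numDomainType) (p : V -> R) (X : {set V}) : R := \sum_(v in X) p v.
Definition ep (d : V) (e : {set V}) : V := odflt d [pick x in e].

Lemma ep_in2 d a b : ep d [set a; b] = a \/ ep d [set a; b] = b.
Proof.
rewrite /ep; case: pickP => [x /=|h].
  by rewrite !inE => /orP[]/eqP ->; [left|right].
by have := h a; rewrite !inE eqxx.
Qed.

Lemma Cc_compl F X a : #|comps F| = 2%N -> X \in comps F -> a \notin X -> Cc F a = ~: X.
Proof.
move=> h2 hX haX; case/imsetP: hX => x _ eX.
have eX' : X = Cc F x by [].
have nxa : ~~ connect (adj F) x a by move: haX; rewrite eX' inE.
apply/setP => v; rewrite in_setC eX' !inE.
apply/idP/idP.
  move=> hav; apply/negP => hxv; move/negP: nxa; apply; apply: connect_trans hxv _.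
  by rewrite csym.
by move=> nxv; case/orP: (conn2 h2 nxa v) => // h; rewrite h in nxv.
Qed.

Lemma pv_compl (R : numDomainType) (p : V -> R) X :
  \sum_v p v = 0 -> pv p (~: X) = - pv p X.
Proof.
move=> h0.
have e : pv p X + pv p (~: X) = 0.
  rewrite -h0 (bigID (fun v => v \in X)) /=; congr (_ + _).
  by apply: eq_bigl => v; rewrite !inE.
by rewrite -[pv p (~: X)]add0r -(addNr (pv p X)) -addrA e addr0.
Qed.

Lemma pv_ind (R : numDomainType) (p : V -> R) Y : pv p Y = \sum_v p v * (v \in Y)%:R.
Proof.
by rewrite /pv big_mkcond; apply: eq_bigr => v _; case: (v \in Y); rewrite ?mulr1 ?mulr0.
Qed.

Lemma flow_id (R : numDomainType) (p : V -> R) d T G :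
  \sum_v p v = 0 -> (forall e, e \in T -> #|e| = 2%N) -> acyclic T ->
  #|comps T| = 1%N -> #|comps G| = 2%N ->
  \sum_(e in T | cross G e) pv p (Cc G (ep d e)) * pv p (Cc (T :\ e) (ep d e)) = qF p G.
Proof.
move=> h0 hT ac h1 h2.
rewrite /qF; case: pickP => [X hX|hn]; last first.
  have : #|comps G| = 0%N by apply: eq_card0 => X; rewrite hn.
  by rewrite h2.
pose eps := fun a => if a \in X then 1 else -1 : R.
have hC : forall a, pv p (Cc G a) = eps a * pv p X.
  move=> a; rewrite /eps; case: ifP => ha.
    by rewrite -(comps_mem hX ha) mul1r.
  by rewrite (Cc_compl h2 hX (negbT ha)) pv_compl // mulN1r.
under eq_bigr => e _ do rewrite hC -mulrA mulrCA.
rewrite -big_distrr /= expr2; congr (_ * _).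
pose c := fun v => \sum_(e in T | cross G e) eps (ep d e) * (v \in Cc (T :\ e) (ep d e))%:R.
transitivity (\sum_v p v * c v).
  rewrite /c; under [RHS]eq_bigr => v _ do rewrite big_distrr /=.
  rewrite exchange_big /=; apply: eq_bigr => e _; rewrite pv_ind big_distrr /=.
  by apply: eq_bigr => v _; rewrite mulrCA.
pose chi := fun v => (v \in X)%:R : R.
have step : forall x y, adj T x y -> c x - chi x = c y - chi y.
  move=> x y hxy.
  have gT : [set x; y] \in T := hxy.
  have xy : x != y by have := hT _ gT; rewrite cards2; case: (x != y).
  suff e : c x - c y = chi x - chi y.
    apply/eqP; rewrite -subr_eq0; apply/eqP.
    transitivity ((c x - c y) - (chi x - chi y)); first by ring.
    by rewrite e subrr.
  have hne : forall e, e \in T -> e != [set x; y] ->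
      (x \in Cc (T :\ e) (ep d e)) = (y \in Cc (T :\ e) (ep d e)).
    move=> e he hne.
    have hT' : adj (T :\ e) x y by rewrite /adj /= in_setD1 gT eq_sym hne.
    rewrite !inE; apply/idP/idP => h; first exact: connect_trans h (connect1 hT').
    by apply: connect_trans h _; rewrite csym; exact: connect1 hT'.
  rewrite /c -sumrB; under eq_bigr do rewrite -mulrBr.
  case hcr: (cross G [set x; y]).
    rewrite (bigD1 [set x; y]) /=; last by rewrite gT hcr.
    rewrite big1 ?addr0; last first.
      by move=> e /andP[/andP[he _] hne']; rewrite (hne e he hne') subrr mulr0.
    rewrite cross2 in hcr.
    have nc := tree_cut ac gT xy.
    have hX2 : (x \in X) = ~~ (y \in X).
      case hx: (x \in X); case hy: (y \in X) => //; exfalso; move/negP: hcr; apply.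
        by have := comps_mem hX hx => e; move: hy; rewrite e inE.
      have := Cc_compl h2 hX (negbT hx) => e.
      have: y \in Cc G x by rewrite e inE hy.
      by rewrite inE.
    case: (ep_in2 d x y) => ->.
      rewrite !inE connect0 (negbTE nc) /eps /chi hX2.
      by case: (y \in X) => /=; ring.
    rewrite !inE connect0 csym (negbTE nc) /eps /chi hX2.
    by case: (y \in X) => /=; ring.
  rewrite big1; last first.
    move=> e /andP[he hce]; have hne' : e != [set x; y].
      by apply/eqP => ee; rewrite -ee hce in hcr.
    by rewrite (hne e he hne') subrr mulr0.
  have cxy : connect (adj G) x y by move: hcr; rewrite cross2 => /negbFE.
  have : (x \in X) = (y \in X).
    case/imsetP: hX => z _ ->; rewrite !inE; apply/idP/idP => h.
      exact: connect_trans h cxy.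
    by apply: connect_trans h _; rewrite csym.
  by rewrite /chi => ->; rewrite subrr.
have hk : forall v, c v - chi v = c d - chi d.
  move=> v; have cl : closed (adj T) [pred v | c v - chi v == c d - chi d].
    by move=> x y hxy; rewrite !inE /= (step x y hxy).
  by have := closed_connect cl (conn1 h1 d v); rewrite !inE /= eqxx => /esym/eqP.
transitivity (\sum_v p v * chi v + (c d - chi d) * \sum_v p v).
  rewrite big_distrr /= -big_split /=; apply: eq_bigr => v _; rewrite -(hk v).
  by ring.
by rewrite h0 mulr0 addr0 -pv_ind.
Qed.

Lemma conn_eq F1 F2 x y : comps F1 = comps F2 ->
  connect (adj F1) x y = connect (adj F2) x y.
Proof.
move=> hc; have := Cc_in F1 x; rewrite hc => h.
have e := comps_mem h (Cc_self F1 x).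
have : (y \in Cc F1 x) = (y \in Cc F2 x) by rewrite e.
by rewrite !inE.
Qed.

End G.

Lemma valid_C (V : finType) (E : {set {set V}}) C : big_component E C ->
  forall w, w \in C -> valid_vert E w.
Proof.
move=> [u0 [vu0 hC]] w /hC h.
suff: forall a b, clos_refl_trans _ (bigadj E) a b -> valid_vert E a -> valid_vert E b.
  by move=> H; exact: H h vu0.
move=> a b; elim => [x y [_ [hy _]] _ | x hx | x y z _ IH1 _ IH2 hx] //.
by apply: IH2; apply: IH1.
Qed.

Lemma C_closed (V : finType) (E : {set {set V}}) C u w : big_component E C ->
  u \in C -> bigadj E u w -> w \in C.
Proof.
case=> u0 [_ hC] /hC hu h; apply/hC; exact: rt_trans hu (rt_step _ _ _ _ h).
Qed.

Lemma N1 (V : finType) (E : {set {set V}}) F1 F2 T e : simple_graph E ->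
  valid_vert E (inl (F1, F2, T)) -> comps F1 = comps F2 -> e \in T -> cross F1 e ->
  bigadj E (inl (F1, F2, T)) (inr (F1 :|: [set e], F2 :|: [set e], T :\ e)).
Proof.
move=> hs hv hc he hcr; have hv' := hv.
case: hv => [[sF1 aF1 cF1] [sF2 aF2 cF2] [sT aT cT]].
have heE : e \in E := subsetP sT e he.
case: (edge2 hs heE) => a [b [ab ee]]; subst e.
rewrite cross2 in hcr.
have hcr2 : ~~ connect (adj F2) a b by rewrite -(conn_eq _ _ hc).
split; first done; split.
  split.
  - split; [by rewrite subUset sF1 sub1set | exact: acyclic_add | exact: conn_union1].
  - split; [by rewrite subUset sF2 sub1set | exact: acyclic_add | exact: conn_union1].
  - split; [exact: subset_trans (subD1set T _) sT | exact: acyclic_sub (subD1set T _) aT |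
            exact: tree_cut2].
exists [set a; b] => //; split.
- by rewrite setUC setD1K.
- by rewrite setUC setU1K // cross_notin.
- by rewrite setUC setU1K // cross_notin.
Qed.

Lemma N1' (V : finType) (E : {set {set V}}) T1 T2 F e : simple_graph E ->
  valid_vert E (inr (T1, T2, F)) -> ~ special E (inr (T1, T2, F)) -> e \in T1 -> cross F e ->
  bigadj E (inr (T1, T2, F)) (inl (T1 :\ e, T2 :\ e, F :|: [set e])) /\ e \in T2.
Proof.
move=> hs hv hns he hcr; have hv' := hv.
case: hv => [[sT1 aT1 cT1] [sT2 aT2 cT2] [sF aF cF]].
have heE : e \in E := subsetP sT1 e he.
case: (edge2 hs heE) => a [b [ab ee]]; subst e.
rewrite cross2 in hcr.
have tF : spanning_tree E (F :|: [set [set a; b]]).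
  split; [by rewrite subUset sF sub1set | exact: acyclic_add | exact: conn_union1].
have he2 : [set a; b] \in T2.
  apply/negPn/negP => hn; apply: hns; exists [set a; b] => //.
  by rewrite in_setU !in_setD he hn.
split => //; split => //; split.
  split => //.
  - split; [exact: subset_trans (subD1set T1 _) sT1 | exact: acyclic_sub (subD1set T1 _) aT1 |
            exact: tree_cut2].
  - split; [exact: subset_trans (subD1set T2 _) sT2 | exact: acyclic_sub (subD1set T2 _) aT2 |
            exact: tree_cut2].
by exists [set a; b].
Qed.

Theorem proposition3p11 (R : realFieldType) (V : finType) (E : {set {set V}})
    (p : V -> R) (C : {set bigvert V}) :
  simple_graph E -> graph_connected E ->
  (\sum_(v : V) p v = 0)%R ->
  big_component E C ->
  (forall u, u \in C -> ~ special E u) ->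
  (\sum_(x : edgeset_triple V | inl x \in C) qF p x.1.1)%R =
  (\sum_(y : edgeset_triple V | inr y \in C) qF p y.2)%R.
Proof.
move=> hs hcon hp hC hns.
have [d _] : exists d : V, true.
  move: hcon; rewrite /graph_connected => /eqP/cards1P [X hX].
  have : X \in comps E by rewrite hX set11.
  by case/imsetP => x _ _; exists x.
pose f := fun pr : edgeset_triple V * {set V} =>
  (pv p (Cc pr.1.1.1 (ep d pr.2)) * pv p (Cc (pr.1.2 :\ pr.2) (ep d pr.2)))%R.
pose g := fun pr : edgeset_triple V * {set V} =>
  (pv p (Cc pr.1.2 (ep d pr.2)) * pv p (Cc (pr.1.1.1 :\ pr.2) (ep d pr.2)))%R.
have szE : forall (T : {set {set V}}) (e : {set V}), T \subset E -> e \in T -> #|e| = 2%N.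
  by move=> T e sT he; exact: (hs e (subsetP sT e he)).
rewrite (eq_bigr (fun x : edgeset_triple V => \sum_(e in x.2 | cross x.1.1 e) f (x, e))%R); last first.
  move=> [[F1 F2] T] hx /=.
  have [[_ aF1 cF1] _ [sT aT cT]] := valid_C hC hx.
  by rewrite -(flow_id d hp (szE T^~ sT)).
rewrite [RHS](eq_bigr (fun y : edgeset_triple V => \sum_(e in y.1.1 | cross y.2 e) g (y, e))%R); last first.
  move=> [[T1 T2] F] hy /=.
  have [[sT1 aT1 cT1] _ [_ aF cF]] := valid_C hC hy.
  by rewrite -(flow_id d hp (szE T1^~ sT1)).
rewrite !pair_big_dep /=.
pose h := fun pr : edgeset_triple V * {set V} =>
  ((pr.1.1.1 :\ pr.2, pr.1.1.2 :\ pr.2, pr.1.2 :|: [set pr.2]), pr.2).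
pose h' := fun pr : edgeset_triple V * {set V} =>
  ((pr.1.1.1 :|: [set pr.2], pr.1.1.2 :|: [set pr.2], pr.1.2 :\ pr.2), pr.2).
pose P := fun pr : edgeset_triple V * {set V} =>
  (inl pr.1 \in C) && ((pr.2 \in pr.1.2) && cross pr.1.1.1 pr.2).
pose Q := fun pr : edgeset_triple V * {set V} =>
  (inr pr.1 \in C) && ((pr.2 \in pr.1.1.1) && cross pr.1.2 pr.2).
have fwd : forall i, P i -> Q (h' i) /\ h (h' i) = i.
  move=> [[[F1 F2] T] e] /and3P /= [hx he hcr].
  have hv := valid_C hC hx.
  have hc : comps F1 = comps F2.
    by case: (comps F1 =P comps F2) => // hn; exfalso; exact: (hns _ hx hn).
  have hadj := N1 hs hv hc he hcr.
  case: hv => [[sF1 aF1 cF1] [sF2 aF2 cF2] [sT aT cT]].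
  case: (edge2 hs (subsetP sT e he)) => a [b [ab ee]]; subst e.
  have hcr2 := hcr; rewrite cross2 in hcr2.
  have hcr3 : ~~ connect (adj F2) a b by rewrite -(conn_eq _ _ hc).
  split.
    rewrite /Q /= (C_closed hC hx hadj) !inE eqxx orbT /= cross2.
    exact: tree_cut.
  rewrite /h /= !(setUC _ [set [set a; b]]) setD1K // !setU1K //; exact: cross_notin.
have bwd : forall j, Q j -> P (h j) /\ h' (h j) = j.
  move=> [[[T1 T2] F] e] /and3P /= [hy he hcr].
  have hv := valid_C hC hy.
  have [hadj he2] := N1' hs hv (hns _ hy) he hcr.
  case: hv => [[sT1 aT1 cT1] [sT2 aT2 cT2] [sF aF cF]].
  case: (edge2 hs (subsetP sT1 e he)) => a [b [ab ee]]; subst e.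
  have hcr2 := hcr; rewrite cross2 in hcr2.
  split.
    rewrite /P /= (C_closed hC hy hadj) !inE eqxx orbT /= cross2.
    exact: tree_cut.
  rewrite /h' /= !(setUC _ [set [set a; b]]) !setD1K // setU1K //; exact: cross_notin.
rewrite (reindex_onto h h' (P := P)); last by move=> i /fwd [].
apply: eq_big => j.
  apply/andP/idP.
    case=> hPj /eqP <-; exact: (fwd _ hPj).1.
  by move=> hQ; have [-> ->] := bwd j hQ; rewrite eqxx.
move=> hPQ; have hQ : Q j.
  by case/andP: hPQ => hPj /eqP e; rewrite -e; exact: (fwd _ hPj).1.
have [_ hj] := bwd j hQ.
clear hPQ; move: hQ; case: j hj => [[[T1 T2] F] e] hj /and3P /= [hy he hcr].
rewrite /f /g /=.
have [[sT1 _ _] _ _] := valid_C hC hy.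
case: (edge2 hs (subsetP sT1 e he)) => a [b [ab ee]]; subst e.
rewrite (setUC _ [set [set a; b]]) setU1K; first by rewrite mulrC.
by apply: cross_notin; rewrite -cross2.
Qed.
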